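(* Let $(W,\omega^W)$ be a vertex operator algebra and $\omega'\in\operatorname{Sc}(W,\omega^W)$ with $Y(\omega',z)=\sum_nL'(n)z^{-n-2}$. Then $L^W(n)=L'(n)$ on $C_W(C_W(\langle\omega'\rangle))$ for all $n\ge -1$.
   Context: $Y(\omega^W,z)=\sum_nL^W(n)z^{-n-2}$. A semi-conformal vector $\omega'$ of $(W,\omega^W)$ is the conformal vector of a vertex operator subalgebra $(U,\omega')$ (possibly different conformal vector) with $\omega^W_n|_U=\omega'_n|_U$ for all $n\ge0$; $\operatorname{Sc}(W,\omega^W)$ is the set of these. $C_W(U)=\{v\in W:u_nv=0\ \forall u\in U,n\ge0\}$; $\langle\omega'\rangle$ is the vertex subalgebra generated by $\omega'$ and $\mathbf1$. *)

(* Defs.v *)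
(* Vertex operator algebras over a field K of characteristic 0
   (the paper works over C). *)
From HB Require Import structures.
From mathcomp Require Import all_boot all_order all_algebra.
Set Implicit Arguments. Unset Strict Implicit. Unset Printing Implicit Defensive.
Import Order.TTheory GRing.Theory Num.Theory.
Local Open Scope ring_scope.

Section VOA.
Variables (K : fieldType) (V : lmodType K).

(* A vertex operator is given by its modes: [Y u n v] is u_n v,
   i.e. Y(u,z) = sum_n u_n z^{-n-1}. *)
Definition vop := V -> int -> V -> V.

Definition binz (p : int) (i : nat) : K :=
  (\prod_(j < i) (p - (j : nat)%:Z)%:~R) / (i`!)%:R.

Definition vertex_algebra (Y : vop) (one : V) : Prop :=
  [/\ ((forall n a u u' v, Y (a *: u + u') n v = a *: Y u n v + Y u' n v) /\
      (forall n a u v v', Y u n (a *: v + v') = a *: Y u n v + Y u n v')),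
      (forall u v, exists N : int, forall n, N <= n -> Y u n v = 0),
      (forall n v, Y one n v = if n == -1 then v else 0),
      (forall u, Y u (-1) one = u /\ forall n, 0 <= n -> Y u n one = 0) &
      (* Borcherds identity; both sides are finite sums by truncation, so
         equality of the sums is equality of all sufficiently long partial sums *)
      (forall (p q r : int) u v w, exists N : nat, forall M : nat, (N <= M)%N ->
        \sum_(i < M) binz p i *: Y (Y u (r + i%:Z) v) (p + q - i%:Z) w =
        \sum_(i < M) ((-1) ^+ i * binz r i) *:
            (Y u (p + r - i%:Z) (Y v (q + i%:Z) w)
             - (-1) ^ r *: Y v (q + r - i%:Z) (Y u (p + i%:Z) w)))].

Definition Lop (Y : vop) (om : V) (n : int) : V -> V := Y om (n + 1).

Definition wt_space (Y : vop) (U : V -> Prop) (om : V) (n : int) : V -> Prop :=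
  fun u => U u /\ Lop Y om 0 u = n%:~R *: u.

Definition conformal_on (Y : vop) (U : V -> Prop) (om : V) : Prop :=
  [/\ exists c : K, forall (m n : int) v, U v ->
        Lop Y om m (Lop Y om n v) - Lop Y om n (Lop Y om m v) =
        (m - n)%:~R *: Lop Y om (m + n) v
        + (((m ^+ 3 - m)%:~R / 12%:R) * (m + n == 0)%:R * c) *: v,
      (forall u v n, U u -> U v -> Y (Lop Y om (-1) u) n v = - (n%:~R *: Y u (n - 1) v)),
      (forall u, U u -> exists s : seq (int * V),
          (forall x, x \in s -> wt_space Y U om x.1 x.2) /\ u = \sum_(x <- s) x.2),
      (forall n, exists b : seq V, forall u, wt_space Y U om n u ->
          exists f : nat -> K, u = \sum_(i < size b) f i *: b`_i) &
      (exists N : int, forall n u, n < N -> wt_space Y U om n u -> u = 0)].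

Definition is_VOA (Y : vop) (one om : V) : Prop :=
  vertex_algebra Y one /\ conformal_on Y (fun _ => True) om.

Definition vsubalg (Y : vop) (one : V) (U : V -> Prop) : Prop :=
  [/\ U 0, (forall a u v, U u -> U v -> U (a *: u + v)), U one &
      (forall u n v, U u -> U v -> U (Y u n v))].

Definition semi_conformal (Y : vop) (one om om' : V) : Prop :=
  exists U : V -> Prop, [/\ vsubalg Y one U, U om', conformal_on Y U om' &
     forall n u, 0 <= n -> U u -> Y om n u = Y om' n u].

Definition commutant (Y : vop) (U : V -> Prop) : V -> Prop :=
  fun v => forall u n, U u -> 0 <= n -> Y u n v = 0.

Definition gen_subalg (Y : vop) (one : V) (S : V -> Prop) : V -> Prop :=
  fun v => forall P, vsubalg Y one P -> (forall s, S s -> P s) -> P v.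

End VOA.

(* Main.v *)
Require Import Defs.
From HB Require Import structures.
From mathcomp Require Import all_boot all_order all_algebra.
From mathcomp Require Import zify.
Import Order.TTheory GRing.Theory Num.Theory.
Local Open Scope ring_scope.

Section Aux.
Variables (K : fieldType) (W : lmodType K) (Y : vop W) (one : W).
Hypothesis HVA : vertex_algebra Y one.

Lemma YlinL n a u u' v : Y (a *: u + u') n v = a *: Y u n v + Y u' n v.
Proof. by case: HVA => [[H _]] *; apply: H. Qed.
Lemma YlinR n a u v v' : Y u n (a *: v + v') = a *: Y u n v + Y u n v'.
Proof. by case: HVA => [[_ H]] *; apply: H. Qed.
Lemma Yr0 u n : Y u n 0 = 0.
Proof.
have := YlinR n 1 u 0 0; rewrite scaler0 addr0 scale1r.
by move/(congr1 (fun t => t - Y u n 0)); rewrite subrr addrK.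
Qed.
Lemma Yl0 u n : Y 0 n u = 0.
Proof.
have := YlinL n 1 0 0 u; rewrite scaler0 addr0 scale1r.
by move/(congr1 (fun t => t - Y 0 n u)); rewrite subrr addrK.
Qed.

Lemma binz0 p : binz K p 0 = 1.
Proof. by rewrite /binz big_ord0 fact0 divr1. Qed.
Lemma binz0S i : binz K 0 i.+1 = 0.
Proof. by rewrite /binz big_ord_recl /= subrr mul0r mul0r. Qed.

Definition annih x : W -> Prop := fun u => forall n, 0 <= n -> Y u n x = 0.

Lemma annih_sub x : vsubalg Y one (annih x).
Proof.
split.
- by move=> n _; rewrite Yl0.
- by move=> a u v Hu Hv n Hn; rewrite YlinL Hu // Hv // scaler0 addr0.
- case: HVA => _ _ Hone _ _ n Hn; rewrite Hone; case: eqP => // E.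
  by rewrite E in Hn.
- move=> u m w Hu Hw n Hn.
  case: HVA => _ _ _ _ B.
  have [N HN] := B 0 n m u w x.
  have := HN N.+1 (leqnSn N).
  rewrite big_ord_recl big1; last first.
    by move=> i _; rewrite binz0S scale0r.
  rewrite big1; last first.
    move=> i _; rewrite Hw; last by lia.
    rewrite Hu; last by lia.
    by rewrite !Yr0 scaler0 subr0 scaler0.
  rewrite addr0 binz0 scale1r.
  have -> : m + (@nat_of_ord N.+1 ord0)%:Z = m by rewrite addr0.
  by have -> : 0 + n - (@nat_of_ord N.+1 ord0)%:Z = n by rewrite add0r subr0.
Qed.

Lemma skew u v r : exists N, forall M, (N <= M)%N ->
   \sum_(i < M) binz K (-1) i *: Y (Y u (r + i%:Z) v) (-1 + -1 - i%:Z) one =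
   Y u (r - 1) v - (-1) ^ r *: Y v (r - 1) u.
Proof.
case: HVA => _ _ _ Hvac B.
have [N HN] := B (-1) (-1) r u v one.
exists N.+1 => M HM.
rewrite HN; last by lia.
case: M HM => [//|M] HM.
rewrite big_ord_recl big1; last first.
  move=> i _.
  rewrite (proj2 (Hvac v)); last by rewrite lift0; lia.
  rewrite (proj2 (Hvac u)); last by rewrite lift0; lia.
  by rewrite !Yr0 scaler0 subr0 scaler0.
rewrite addr0 expr0 mul1r binz0 scale1r.
have -> : -1 + (@nat_of_ord M.+1 ord0)%:Z = -1 by rewrite addr0.
rewrite (proj1 (Hvac v)) (proj1 (Hvac u)).
by have -> : -1 + r - (@nat_of_ord M.+1 ord0)%:Z = r - 1 by rewrite subr0 addrC.
Qed.

End Aux.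

Lemma m1z_neq0 (K : fieldType) (r : int) : (-1 : K) ^ r != 0.
Proof.
case: r => n; rewrite ?exprz_inv.
- by rewrite expfz_eq0 oppr_eq0 oner_eq0 andbF.
- by rewrite expfz_eq0 oppr_eq0 oner_eq0 andbF.
Qed.

Theorem proposition2p6 (K : fieldType) (charK0 : [pchar K] =i pred0)
  (W : lmodType K) (Y : vop W) (one omW om' : W) :
  is_VOA Y one omW -> semi_conformal Y one omW om' ->
  forall v, commutant Y (commutant Y (gen_subalg Y one (fun x => x = om'))) v ->
  forall n : int, -1 <= n -> Lop Y omW n v = Lop Y om' n v.
Proof.
move=> [HVA _] [U [_ HUom _ Hagree]] v Hv n Hn.
have key : forall k, 0 <= k -> Y om' k omW = Y om' k om'.
  move=> k Hk.
  have [N1 E1] := @skew _ _ _ _ HVA omW om' (k + 1).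
  have [N2 E2] := @skew _ _ _ _ HVA om' om' (k + 1).
  set N3 := maxn N1 N2.
  have E : \sum_(i < N3) binz K (-1) i *: Y (Y omW (k + 1 + i%:Z) om') (-1 + -1 - i%:Z) one =
           \sum_(i < N3) binz K (-1) i *: Y (Y om' (k + 1 + i%:Z) om') (-1 + -1 - i%:Z) one.
    by apply: eq_bigr => i _; rewrite Hagree //; lia.
  rewrite E1 ?leq_maxl // E2 ?leq_maxr // addrK Hagree // in E.
  move/(congr1 (fun t => Y om' k om' - t)): E; rewrite !opprB => /addrI /(congr1 (fun t => t + Y om' k om')); rewrite !subrK.
  move/(congr1 (fun t => ((-1) ^ (k + 1))^-1 *: t)).
  by rewrite !scalerA mulVf ?m1z_neq0 // !scale1r.
set x := (-1) *: om' + omW.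
have Hx : commutant Y (gen_subalg Y one (fun x => x = om')) x.
  move=> u k Hu Hk.
  apply: (Hu (@annih _ _ Y x) (@annih_sub K W Y one HVA x)) => // s -> j Hj.
  by rewrite /x (@YlinR _ _ _ _ HVA) key // scaleN1r addNr.
have := Hv x (n + 1) Hx ltac:(lia).
rewrite /x (@YlinL _ _ _ _ HVA) scaleN1r => /eqP; rewrite addrC subr_eq0 => /eqP.
by rewrite /Lop.
Qed.
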